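(* Let $T=(T_{i,j})_{i,j\in\mathbb{Z}}$ be a translation-invariant stochastic matrix on $\mathbb{Z}$ that is strictly finite-ranged: there are nonnegative integers $l_1,l_2$ with $T_{j-l,j}=0$ for $l>l_1$, $T_{j+l,j}=0$ for $l>l_2$, $T_{j-l_1,j}\ne0$, $T_{j+l_2,j}\ne0$. Let $\xi(k)=\sum_lT_{j+l,j}e^{-ikl}$ and assume $\xi(k)\ne0$ for all $k\in[-\pi,\pi]$. If $$T_{j-l_1,j}\ge T_{j-l_1+1,j}\ge\cdots\ge T_{j+l_2,j}\ (\ge0),$$ then $w(T,0)=l_1$. In particular, if $T_{j+l,j}=0$ for all $l<0$ and $T_{j,j}\ge T_{j+1,j}\ge\cdots\ge T_{j+l_2,j}$, then $w(T,0)=0$.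
   Context: A stochastic matrix on $\mathbb{Z}$ is a real matrix $(T_{i,j})$ with $T_{i,j}\ge0$ and $\sum_iT_{i,j}=1$ for each $j$; it is translation invariant if $T_{i+1,j+1}=T_{i,j}$ (so $T_{j+l,j}$ is independent of $j$). The winding number is $w(T,0)=\int_{-\pi}^{\pi}\frac{dk}{2\pi i}\partial_k\log\xi(k)\in\mathbb{Z}$. *)

(* Defs.v *)
From Stdlib Require Import Reals ZArith.
From Coquelicot Require Import Coquelicot.
Open Scope R_scope.

(* A real matrix on Z is a function T : Z -> Z -> R, T i j = T_{i,j}. *)

(* Stochastic: nonnegative entries, every column sums to 1
   (the sum over i in Z split as i = j + n, n >= 0, and i = j - (n+1)). *)
Definition stochastic (T : Z -> Z -> R) : Prop :=
  (forall i j, 0 <= T i j) /\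
  (forall j, exists a b : R,
      is_series (fun n : nat => T (j + Z.of_nat n)%Z j) a /\
      is_series (fun n : nat => T (j - Z.of_nat (S n))%Z j) b /\
      a + b = 1).

Definition translation_invariant (T : Z -> Z -> R) : Prop :=
  forall i j, T (i + 1)%Z (j + 1)%Z = T i j.

Definition strictly_finite_ranged (T : Z -> Z -> R) (l1 l2 : nat) : Prop :=
  (forall j l, (Z.of_nat l1 < l)%Z -> T (j - l)%Z j = 0) /\
  (forall j l, (Z.of_nat l2 < l)%Z -> T (j + l)%Z j = 0) /\
  (forall j, T (j - Z.of_nat l1)%Z j <> 0) /\
  (forall j, T (j + Z.of_nat l2)%Z j <> 0).

Definition expi (x : R) : C := (cos x, sin x).

(* xi(k) = sum_l T_{j+l,j} e^{-ikl}; for a strictly finite-ranged, translation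
   invariant T, only l in [-l1, l2] contribute, and we take j = 0. *)
Definition xi (T : Z -> Z -> R) (l1 l2 : nat) (k : R) : C :=
  sum_n (fun n : nat =>
           let l := (Z.of_nat n - Z.of_nat l1)%Z in
           RtoC (T l 0%Z) * expi (- k * IZR l))%C (l1 + l2).

(* d/dk xi(k) = sum_l T_{j+l,j} (-i l) e^{-ikl} (termwise derivative). *)
Definition dxi (T : Z -> Z -> R) (l1 l2 : nat) (k : R) : C :=
  sum_n (fun n : nat =>
           let l := (Z.of_nat n - Z.of_nat l1)%Z in
           RtoC (T l 0%Z) * (- Ci * RtoC (IZR l)) * expi (- k * IZR l))%C (l1 + l2).

(* Winding number w(T,0) = int_{-pi}^{pi} dk/(2 pi i) d_k log xi(k)
   = (1/(2 pi i)) int_{-pi}^{pi} xi'(k)/xi(k) dk. *)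
Definition winding (T : Z -> Z -> R) (l1 l2 : nat) : C :=
  (@RInt C_R_CompleteNormedModule (fun k => dxi T l1 l2 k / xi T l1 l2 k)%C (- PI) PI
   / (RtoC (2 * PI) * Ci))%C.

(* Main.v *)
Require Import Defs.
From Stdlib Require Import Reals ZArith Lra Psatz.
From Coquelicot Require Import Coquelicot.
Open Scope R_scope.

Lemma arg_deriv (u v : R -> R) (du dv k : R) :
  is_derive u k du -> is_derive v k dv ->
  0 < sqrt (u k ^ 2 + v k ^ 2) + u k ->
  is_derive (fun t => 2 * atan (v t / (sqrt (u t ^ 2 + v t ^ 2) + u t))) k
    ((u k * dv - v k * du) / (u k ^ 2 + v k ^ 2)).
Proof.
  intros Hu Hv Hp.
  assert (Hr : 0 < u k ^ 2 + v k ^ 2).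
  { destruct (Req_dec (u k ^ 2 + v k ^ 2) 0) as [E|E].
    - rewrite E, sqrt_0 in Hp. nra.
    - nra. }
  auto_derive.
  { repeat split; try (eexists; eassumption); try nra; try lra.
    replace (u k * (u k * 1) + v k * (v k * 1)) with (u k ^ 2 + v k ^ 2) by ring. lra. }
  replace (Derive (fun x => u x) k) with du by (symmetry; apply is_derive_unique; exact Hu).
  replace (Derive (fun x => v x) k) with dv by (symmetry; apply is_derive_unique; exact Hv).
  replace (u k * (u k * 1) + v k * (v k * 1)) with (u k ^ 2 + v k ^ 2) by ring.
  assert (Hs := sqrt_sqrt (u k ^ 2 + v k ^ 2) (Rlt_le _ _ Hr)).
  assert (Hs0 : 0 < sqrt (u k ^ 2 + v k ^ 2)) by (apply sqrt_lt_R0; lra).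
  revert Hs Hs0 Hp Hr.
  generalize (sqrt (u k ^ 2 + v k ^ 2)) as r. generalize (u k) (v k). intros a b r Hs Hs0 Hp Hr.
  assert (E : b ^ 2 = r * r - a ^ 2) by lra.
  field_simplify; try lra.
  { rewrite E. replace (a ^ 2 + b ^ 2) with (r * r) by lra. field. split; nra. }
  split; [lra|split; nra].
Qed.

Lemma is_derive_sumf (f f' : nat -> R -> R) N k :
  (forall n, is_derive (f n) k (f' n k)) ->
  is_derive (fun t => sum_f_R0 (fun n => f n t) N) k (sum_f_R0 (fun n => f' n k) N).
Proof.
  intros H. induction N as [|N IH]; simpl.
  - apply H.
  - apply (is_derive_plus (fun t => sum_f_R0 (fun n => f n t) N) (f (S N))); auto.
Qed.

Lemma ex_derive_sumf (f : nat -> R -> R) N k :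
  (forall n, ex_derive (f n) k) ->
  ex_derive (fun t => sum_f_R0 (fun n => f n t) N) k.
Proof.
  intros H. induction N as [|N IH]; simpl.
  - apply H.
  - apply (ex_derive_plus (fun t => sum_f_R0 (fun n => f n t) N) (f (S N))); auto.
Qed.

Lemma sum_lin (f g : nat -> R) (p q : R) N :
  p * sum_f_R0 f N + q * sum_f_R0 g N = sum_f_R0 (fun n => p * f n + q * g n) N.
Proof. induction N as [|N IH]; simpl. ring. rewrite <- IH. ring. Qed.

Lemma abel (a c : nat -> R) M :
  c 0%nat = 1 -> (forall n, c n <= 1) -> (forall n, 0 <= a n) ->
  (forall n, (n < M)%nat -> a (S n) <= a n) ->
  forall N, (N <= M)%nat ->
  a N * (1 - c (S N)) <= sum_f_R0 (fun n => a n * (c n - c (S n))) N.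
Proof.
  intros H0 H1 Ha Hd N. induction N as [|N IH]; intros HN; simpl.
  - rewrite H0. lra.
  - assert (IH' := IH ltac:(lia)). assert (Hd' := Hd N ltac:(lia)).
    assert (h1 := H1 (S N)). assert (h2 := Ha (S N)).
    nra.
Qed.

Lemma cos_eq1 k : - PI <= k <= PI -> cos k = 1 -> k = 0.
Proof.
  intros Hk Hc. destruct (Rtotal_order k 0) as [H|[H|H]]; auto.
  - rewrite <- cos_neg in Hc. assert (cos (- k) < cos 0) by
      (apply cos_decreasing_1; lra). rewrite cos_0 in H0. lra.
  - assert (cos k < cos 0) by (apply cos_decreasing_1; lra). rewrite cos_0 in H0. lra.
Qed.

Definition aT (T : Z -> Z -> R) l1 n := T (Z.of_nat n - Z.of_nat l1)%Z 0%Z.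
Definition mT (l1 : nat) n := IZR (Z.of_nat n - Z.of_nat l1).
Definition Xf (a m : nat -> R) N k := sum_f_R0 (fun n => a n * cos (- k * m n)) N.
Definition Yf (a m : nat -> R) N k := sum_f_R0 (fun n => a n * sin (- k * m n)) N.
Definition Xd (a m : nat -> R) N k := sum_f_R0 (fun n => a n * (m n * sin (- k * m n))) N.
Definition Yd (a m : nat -> R) N k := sum_f_R0 (fun n => a n * (- m n * cos (- k * m n))) N.

Lemma xi_pair T l1 l2 k :
  xi T l1 l2 k = (Xf (aT T l1) (mT l1) (l1 + l2) k, Yf (aT T l1) (mT l1) (l1 + l2) k).
Proof.
  unfold xi, Xf, Yf. generalize (l1 + l2)%nat as N. intros N.
  induction N as [|N IH].
  - rewrite sum_O. unfold aT, mT, RtoC, expi, Cmult; simpl. f_equal; ring.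
  - rewrite sum_Sn, IH. unfold aT, mT, RtoC, expi, Cmult, plus; simpl. unfold Cplus; simpl.
    f_equal; ring.
Qed.

Lemma dxi_pair T l1 l2 k :
  dxi T l1 l2 k = (Xd (aT T l1) (mT l1) (l1 + l2) k, Yd (aT T l1) (mT l1) (l1 + l2) k).
Proof.
  unfold dxi, Xd, Yd. generalize (l1 + l2)%nat as N. intros N.
  induction N as [|N IH].
  - rewrite sum_O. unfold aT, mT, RtoC, expi, Cmult, Copp, Ci; simpl. f_equal; ring.
  - rewrite sum_Sn, IH. unfold aT, mT, RtoC, expi, Cmult, Copp, Ci, plus; simpl. unfold Cplus; simpl.
    f_equal; ring.
Qed.

Lemma sc1 x : sin x ^ 2 + cos x ^ 2 = 1.
Proof. rewrite <- (sin2_cos2 x). unfold Rsqr. ring. Qed.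

Lemma dX a m N k : is_derive (Xf a m N) k (Xd a m N k).
Proof.
  unfold Xf, Xd.
  apply (is_derive_sumf (fun n t => a n * cos (- t * m n)) (fun n t => a n * (m n * sin (- t * m n)))).
  intros n. auto_derive; auto. ring.
Qed.

Lemma dY a m N k : is_derive (Yf a m N) k (Yd a m N k).
Proof.
  unfold Yf, Yd.
  apply (is_derive_sumf (fun n t => a n * sin (- t * m n)) (fun n t => a n * (- m n * cos (- t * m n)))).
  intros n. auto_derive; auto. ring.
Qed.

Lemma eXd a m N k : ex_derive (Xd a m N) k.
Proof.
  unfold Xd. apply (ex_derive_sumf (fun n t => a n * (m n * sin (- t * m n)))).
  intros n. auto_derive; auto.
Qed.

Lemma eYd a m N k : ex_derive (Yd a m N) k.
Proof.
  unfold Yd. apply (ex_derive_sumf (fun n t => a n * (- m n * cos (- t * m n)))).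
  intros n. auto_derive; auto.
Qed.

Definition uf a m N L t := cos (L * t) * Xf a m N t + sin (L * t) * Yf a m N t.
Definition vf a m N L t := - sin (L * t) * Xf a m N t + cos (L * t) * Yf a m N t.
Definition Fi a m N L t := L * t + 2 * atan (vf a m N L t / (sqrt (uf a m N L t ^ 2 + vf a m N L t ^ 2) + uf a m N L t)).
Definition Fr a m N t := ln (Xf a m N t ^ 2 + Yf a m N t ^ 2) / 2.
Definition Gr a m N t := (Xf a m N t * Xd a m N t + Yf a m N t * Yd a m N t) / (Xf a m N t ^ 2 + Yf a m N t ^ 2).
Definition Gi a m N t := (Xf a m N t * Yd a m N t - Yf a m N t * Xd a m N t) / (Xf a m N t ^ 2 + Yf a m N t ^ 2).

Lemma uf_sum a m N L k : (forall n, m n = INR n - L) ->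
  uf a m N L k = sum_f_R0 (fun n => a n * cos (INR n * k)) N.
Proof.
  intros Hm. unfold uf, Xf, Yf. rewrite sum_lin. apply sum_eq. intros n _.
  rewrite Hm. replace (INR n * k) with (L * k - (- k * (INR n - L))) by ring.
  rewrite cos_minus. ring.
Qed.

Lemma vf_sum a m N L k : (forall n, m n = INR n - L) ->
  vf a m N L k = sum_f_R0 (fun n => - (a n * sin (INR n * k))) N.
Proof.
  intros Hm. unfold vf, Xf, Yf. rewrite sum_lin. apply sum_eq. intros n _.
  rewrite Hm. replace (INR n * k) with (L * k - (- k * (INR n - L))) by ring.
  rewrite sin_minus. ring.
Qed.

Lemma uv_norm a m N L k :
  uf a m N L k ^ 2 + vf a m N L k ^ 2 = Xf a m N k ^ 2 + Yf a m N k ^ 2.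
Proof.
  unfold uf, vf. assert (H := sc1 (L * k)).
  transitivity ((sin (L*k) ^ 2 + cos (L*k) ^ 2) * (Xf a m N k ^ 2 + Yf a m N k ^ 2)); [ring|].
  rewrite H; ring.
Qed.

Lemma pos_arg a m N L k :
  (forall n, 0 <= a n) -> (forall n, (n < N)%nat -> a (S n) <= a n) ->
  (forall n, m n = INR n - L) ->
  - PI <= k <= PI -> 0 < Xf a m N k ^ 2 + Yf a m N k ^ 2 ->
  0 < sqrt (uf a m N L k ^ 2 + vf a m N L k ^ 2) + uf a m N L k.
Proof.
  intros Ha Hd Hm Hk Hnz.
  rewrite <- (uv_norm a m N L k) in Hnz.
  assert (Hs := sqrt_sqrt _ (Rlt_le _ _ Hnz)).
  assert (Hs0 : 0 < sqrt (uf a m N L k ^ 2 + vf a m N L k ^ 2)) by (apply sqrt_lt_R0; lra).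
  revert Hs Hs0.
  generalize (sqrt (uf a m N L k ^ 2 + vf a m N L k ^ 2)) as r. intros r Hs Hs0.
  destruct (Rlt_or_le 0 (r + uf a m N L k)) as [H|H]; [exact H|exfalso].
  assert (Hv : vf a m N L k = 0) by nra.
  assert (Hu : uf a m N L k < 0) by nra.
  assert (Hab := abel a (fun n => cos (INR n * k)) N ltac:(simpl; rewrite Rmult_0_l; apply cos_0)
     ltac:(intros; apply COS_bound) Ha Hd N (le_n _)).
  assert (Hid : sum_f_R0 (fun n => a n * (cos (INR n * k) - cos (INR (S n) * k))) N =
     (1 - cos k) * uf a m N L k + (- sin k) * vf a m N L k).
  { rewrite (uf_sum a m N L k Hm), (vf_sum a m N L k Hm), sum_lin. apply sum_eq. intros n _.
    rewrite S_INR. replace ((INR n + 1) * k) with (INR n * k + k) by ring. rewrite cos_plus. ring. }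
  cbv beta in Hab. rewrite Hid, Hv in Hab.
  assert (HaN := Ha N). assert (Hc := COS_bound (INR (S N) * k)).
  assert (Hck := COS_bound k).
  assert (Hc1 : cos k = 1) by nra.
  assert (Hk0 := cos_eq1 k Hk Hc1). subst k.
  rewrite (uf_sum a m N L 0 Hm) in Hu.
  assert (0 <= sum_f_R0 (fun n : nat => a n * cos (INR n * 0)) N).
  { apply cond_pos_sum. intros n. rewrite Rmult_0_r, cos_0. rewrite Rmult_1_r. apply Ha. }
  lra.
Qed.

Lemma dFi a m N L k :
  0 < sqrt (uf a m N L k ^ 2 + vf a m N L k ^ 2) + uf a m N L k ->
  is_derive (Fi a m N L) k (Gi a m N k).
Proof.
  intros Hp.
  set (X := Xf a m N k). set (Y := Yf a m N k). set (X' := Xd a m N k). set (Y' := Yd a m N k).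
  set (c := cos (L * k)). set (s := sin (L * k)).
  assert (Hdu : is_derive (uf a m N L) k (- L * s * X + c * X' + L * c * Y + s * Y')).
  { unfold uf. auto_derive.
    - split; [exists X'; apply dX|split; [exists Y'; apply dY|auto]].
      replace (Derive (fun x => Xf a m N x) k) with X' by (symmetry; apply is_derive_unique; apply dX).
      replace (Derive (fun x => Yf a m N x) k) with Y' by (symmetry; apply is_derive_unique; apply dY).
      unfold X, Y, X', Y', c, s. ring. }
  assert (Hdv : is_derive (vf a m N L) k (- L * c * X - s * X' - L * s * Y + c * Y')).
  { unfold vf. auto_derive.
    - split; [exists X'; apply dX|split; [exists Y'; apply dY|auto]].
    - replace (Derive (fun x => Xf a m N x) k) with X' by (symmetry; apply is_derive_unique; apply dX).
      replace (Derive (fun x => Yf a m N x) k) with Y' by (symmetry; apply is_derive_unique; apply dY).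
      unfold X, Y, X', Y', c, s. ring. }
  assert (H1 := arg_deriv _ _ _ _ k Hdu Hdv Hp).
  assert (H0 : is_derive (fun t => L * t) k L) by (auto_derive; try ring; auto).
  assert (H2 := is_derive_plus _ _ _ _ _ H0 H1).
  assert (Hn := uv_norm a m N L k). fold X Y in Hn.
  assert (Hpos : 0 < X ^ 2 + Y ^ 2).
  { rewrite <- Hn. destruct (Req_dec (uf a m N L k ^ 2 + vf a m N L k ^ 2) 0) as [E|E].
    - rewrite E, sqrt_0 in Hp. nra.
    - nra. }
  unfold Fi. replace (Gi a m N k) with (plus L ((uf a m N L k * (- L * c * X - s * X' - L * s * Y + c * Y') - vf a m N L k * (- L * s * X + c * X' + L * c * Y + s * Y')) / (uf a m N L k ^ 2 + vf a m N L k ^ 2))).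
  { exact H2. }
  rewrite Hn. unfold Gi. fold X Y X' Y'. unfold plus; simpl.
  unfold uf, vf. fold X Y c s.
  assert (Hcs : s ^ 2 + c ^ 2 = 1) by apply sc1.
  transitivity (L + (s ^ 2 + c ^ 2) * (X * Y' - Y * X' - L * (X ^ 2 + Y ^ 2)) / (X ^ 2 + Y ^ 2)).
  { f_equal. f_equal. ring. }
  rewrite Hcs. field. lra.
Qed.

Lemma dFr a m N k : 0 < Xf a m N k ^ 2 + Yf a m N k ^ 2 ->
  is_derive (Fr a m N) k (Gr a m N k).
Proof.
  intros Hp. unfold Fr. auto_derive.
  - split; [eexists; apply dX|split; [eexists; apply dY|split; [|exact I]]].
    replace (Xf a m N k * (Xf a m N k * 1) + Yf a m N k * (Yf a m N k * 1)) with (Xf a m N k ^ 2 + Yf a m N k ^ 2) by ring. exact Hp.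
  - replace (Derive (fun x => Xf a m N x) k) with (Xd a m N k) by (symmetry; apply is_derive_unique; apply dX).
    replace (Derive (fun x => Yf a m N x) k) with (Yd a m N k) by (symmetry; apply is_derive_unique; apply dY).
    unfold Gr. field. lra.
Qed.

Lemma cGr a m N k : 0 < Xf a m N k ^ 2 + Yf a m N k ^ 2 -> continuous (Gr a m N) k.
Proof.
  intros Hp. apply (ex_derive_continuous (Gr a m N)). unfold Gr. auto_derive.
  repeat (match goal with |- _ /\ _ => split end);
  match goal with
  | |- True => exact I
  | |- ex_derive (fun x => Xf _ _ _ x) _ => eexists; apply dX
  | |- ex_derive (fun x => Yf _ _ _ x) _ => eexists; apply dY
  | |- ex_derive (fun x => Xd _ _ _ x) _ => apply eXd
  | |- ex_derive (fun x => Yd _ _ _ x) _ => apply eYd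
  | |- _ => replace (Xf a m N k * (Xf a m N k * 1) + Yf a m N k * (Yf a m N k * 1)) with (Xf a m N k ^ 2 + Yf a m N k ^ 2) by ring; lra
  end.
Qed.

Lemma cGi a m N k : 0 < Xf a m N k ^ 2 + Yf a m N k ^ 2 -> continuous (Gi a m N) k.
Proof.
  intros Hp. apply (ex_derive_continuous (Gi a m N)). unfold Gi. auto_derive.
  repeat (match goal with |- _ /\ _ => split end);
  match goal with
  | |- True => exact I
  | |- ex_derive (fun x => Xf _ _ _ x) _ => eexists; apply dX
  | |- ex_derive (fun x => Yf _ _ _ x) _ => eexists; apply dY
  | |- ex_derive (fun x => Xd _ _ _ x) _ => apply eXd
  | |- ex_derive (fun x => Yd _ _ _ x) _ => apply eYd
  | |- _ => replace (Xf a m N k * (Xf a m N k * 1) + Yf a m N k * (Yf a m N k * 1)) with (Xf a m N k ^ 2 + Yf a m N k ^ 2) by ring; lra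
  end.
Qed.

Lemma sinZPI z : sin (IZR z * PI) = 0.
Proof. apply sin_eq_0_1. exists z. reflexivity. Qed.

Lemma perX a m N : (forall n, exists z, m n = IZR z) -> Xf a m N (- PI) = Xf a m N PI.
Proof.
  intros Hmz. unfold Xf. apply sum_eq. intros n _. f_equal.
  replace (- - PI * m n) with (- (- PI * m n)) by ring. apply cos_neg.
Qed.

Lemma perY a m N : (forall n, exists z, m n = IZR z) -> Yf a m N (- PI) = Yf a m N PI.
Proof.
  intros Hmz. unfold Yf. apply sum_eq. intros n _. f_equal.
  destruct (Hmz n) as [z Hz]. rewrite Hz.
  replace (- - PI * IZR z) with (IZR z * PI) by ring.
  replace (- PI * IZR z) with (IZR (- z) * PI) by (rewrite opp_IZR; ring).
  rewrite !sinZPI. reflexivity.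
Qed.

Lemma main_int a m N L :
  (forall n, 0 <= a n) -> (forall n, (n < N)%nat -> a (S n) <= a n) ->
  (forall n, m n = INR n - L) -> (forall n, exists z, m n = IZR z) -> (exists z, L = IZR z) ->
  (forall k, - PI <= k <= PI -> 0 < Xf a m N k ^ 2 + Yf a m N k ^ 2) ->
  @is_RInt C_R_CompleteNormedModule (fun k => (Gr a m N k, Gi a m N k)) (- PI) PI (0, 2 * PI * L).
Proof.
  intros Ha Hd Hm Hmz [zL HL] Hnz.
  assert (HPI := PI_RGT_0).
  assert (Hmin : Rmin (- PI) PI = - PI) by (apply Rmin_left; lra).
  assert (Hmax : Rmax (- PI) PI = PI) by (apply Rmax_right; lra).
  apply (is_RInt_fct_extend_pair (U:=R_NormedModule) (V:=R_NormedModule) (fun k => (Gr a m N k, Gi a m N k))); simpl.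
  - replace 0 with (minus (Fr a m N PI) (Fr a m N (- PI))).
    + eapply is_RInt_ext; [intros; reflexivity|].
      apply (is_RInt_derive (Fr a m N) (Gr a m N)); rewrite Hmin, Hmax; intros x Hx.
      * apply dFr, Hnz, Hx.
      * apply cGr, Hnz, Hx.
    + unfold Fr. rewrite perX, perY by exact Hmz. unfold minus, plus, opp; simpl. ring.
  - replace (2 * PI * L) with (minus (Fi a m N L PI) (Fi a m N L (- PI))).
    + eapply is_RInt_ext; [intros; reflexivity|].
      apply (is_RInt_derive (Fi a m N L) (Gi a m N)); rewrite Hmin, Hmax; intros x Hx.
      * apply dFi, pos_arg; auto.
      * apply cGi, Hnz, Hx.
    + unfold Fi, uf, vf. rewrite perX, perY by exact Hmz.
      replace (L * - PI) with (- (L * PI)) by ring. rewrite cos_neg, sin_neg.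
      rewrite HL, sinZPI. unfold minus, plus, opp; simpl. rewrite !Ropp_0. ring.
Qed.

Lemma part1 : forall (T : Z -> Z -> R) (l1 l2 : nat),
      stochastic T ->
      translation_invariant T ->
      strictly_finite_ranged T l1 l2 ->
      (forall k, - PI <= k <= PI -> xi T l1 l2 k <> RtoC 0) ->
      (forall j l, (- Z.of_nat l1 <= l < Z.of_nat l2)%Z ->
          T (j + l + 1)%Z j <= T (j + l)%Z j) ->
      winding T l1 l2 = RtoC (INR l1).
Proof.
  intros T l1 l2 Hst _ _ Hnz Hmon.
  assert (HPI := PI_RGT_0).
  assert (Hint := main_int (aT T l1) (mT l1) (l1 + l2) (INR l1)).
  assert (Hint' : @is_RInt C_R_CompleteNormedModule
            (fun k => (Gr (aT T l1) (mT l1) (l1 + l2) k, Gi (aT T l1) (mT l1) (l1 + l2) k))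
            (- PI) PI (0, 2 * PI * INR l1)).
  { apply Hint.
    - intros n. unfold aT. apply (proj1 Hst).
    - intros n Hn. unfold aT.
      assert (H := Hmon 0%Z (Z.of_nat n - Z.of_nat l1)%Z ltac:(lia)).
      replace (0 + (Z.of_nat n - Z.of_nat l1) + 1)%Z with (Z.of_nat (S n) - Z.of_nat l1)%Z in H by lia.
      replace (0 + (Z.of_nat n - Z.of_nat l1))%Z with (Z.of_nat n - Z.of_nat l1)%Z in H by lia.
      exact H.
    - intros n. unfold mT. rewrite minus_IZR, <- !INR_IZR_INZ. reflexivity.
    - intros n. exists (Z.of_nat n - Z.of_nat l1)%Z. reflexivity.
    - exists (Z.of_nat l1). apply INR_IZR_INZ.
    - intros k Hk. assert (H := Hnz k Hk). rewrite xi_pair in H.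
      destruct (Rlt_or_le 0 (Xf (aT T l1) (mT l1) (l1 + l2) k ^ 2 + Yf (aT T l1) (mT l1) (l1 + l2) k ^ 2)) as [H'|H']; [exact H'|].
      exfalso. apply H. unfold RtoC. f_equal; nra. }
  assert (Hc : @is_RInt C_R_CompleteNormedModule (fun k => (dxi T l1 l2 k / xi T l1 l2 k)%C)
            (- PI) PI (0, 2 * PI * INR l1)).
  { refine (is_RInt_ext _ _ _ _ _ _ Hint').
    intros x Hx. rewrite Rmin_left in Hx by lra. rewrite Rmax_right in Hx by lra.
    assert (H := Hnz x ltac:(lra)).
    rewrite xi_pair in H |- *. rewrite dxi_pair.
    assert (Hp : 0 < Xf (aT T l1) (mT l1) (l1 + l2) x ^ 2 + Yf (aT T l1) (mT l1) (l1 + l2) x ^ 2).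
    { destruct (Rlt_or_le 0 (Xf (aT T l1) (mT l1) (l1 + l2) x ^ 2 + Yf (aT T l1) (mT l1) (l1 + l2) x ^ 2)) as [H'|H']; [exact H'|].
      exfalso. apply H. unfold RtoC. f_equal; nra. }
    unfold Gr, Gi, Cdiv, Cmult, Cinv; simpl. f_equal; field; nra. }
  unfold winding. rewrite (is_RInt_unique _ _ _ _ Hc).
  unfold Cdiv, Cmult, Cinv, RtoC, Ci; simpl. f_equal; field; lra.
Qed.

Theorem mainTheorem5 :
  (forall (T : Z -> Z -> R) (l1 l2 : nat),
      stochastic T ->
      translation_invariant T ->
      strictly_finite_ranged T l1 l2 ->
      (forall k, - PI <= k <= PI -> xi T l1 l2 k <> RtoC 0) ->
      (forall j l, (- Z.of_nat l1 <= l < Z.of_nat l2)%Z ->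
          T (j + l + 1)%Z j <= T (j + l)%Z j) ->
      winding T l1 l2 = RtoC (INR l1))
  /\
  (forall (T : Z -> Z -> R) (l1 l2 : nat),
      stochastic T ->
      translation_invariant T ->
      strictly_finite_ranged T l1 l2 ->
      (forall k, - PI <= k <= PI -> xi T l1 l2 k <> RtoC 0) ->
      (forall j l, (l < 0)%Z -> T (j + l)%Z j = 0) ->
      (forall j l, (0 <= l < Z.of_nat l2)%Z ->
          T (j + l + 1)%Z j <= T (j + l)%Z j) ->
      winding T l1 l2 = RtoC 0).
Proof.
  split; [exact part1|].
  intros T l1 l2 Hst Hti Hsfr Hnz Hneg Hmon.
  destruct l1 as [|l1'].
  - change 0 with (INR 0). apply part1; auto.
  - exfalso. destruct Hsfr as [_ [_ [H3 _]]].
    apply (H3 0%Z). replace (0 - Z.of_nat (S l1'))%Z with (0 + - Z.of_nat (S l1'))%Z by lia.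
    apply Hneg. lia.
Qed.
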